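(* Let $W \in \mathcal{D}_1$. Then $L(LWR)^{-1}R \in \mathcal{D}_1$, and $R$ is a prefix of $L(LWR)^{-1}R$, i.e. $L(LWR)^{-1}R = RU$ for some $U \in \mathcal{D}_1$.
   Context: $L = \begin{pmatrix} 1 & 0 \\ 1 & 1\end{pmatrix}$ and $R = \begin{pmatrix} 1 & 1 \\ 0 & 1\end{pmatrix}$. $\mathcal{D}_1$ denotes the set of $2\times 2$ matrices with nonnegative integer entries and determinant $1$. The map sending a finite word over the alphabet $\{L,R\}$ to the product of the corresponding matrices is an isomorphism of the free monoid $\{L,R\}^*$ onto $\mathcal{D}_1$ (the empty word maps to the identity), so elements of $\mathcal{D}_1$ are identified with words over $\{L,R\}$; ''prefix'' refers to this word representation. *)

(* Defs.v *)
From mathcomp Require Import all_boot all_order all_algebra.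
Set Implicit Arguments. Unset Strict Implicit. Unset Printing Implicit Defensive.
Import Order.TTheory GRing.Theory Num.Theory.
Local Open Scope ring_scope.

(* L = [[1,0],[1,1]] : entry (i,j) is 1 iff j <= i *)
Definition Lmx : 'M[int]_2 := \matrix_(i < 2, j < 2) (if (j <= i)%N then 1 else 0).
(* R = [[1,1],[0,1]] : entry (i,j) is 1 iff i <= j *)
Definition Rmx : 'M[int]_2 := \matrix_(i < 2, j < 2) (if (i <= j)%N then 1 else 0).

Definition D1 (M : 'M[int]_2) : Prop := (forall i j, 0 <= M i j) /\ \det M = 1.

(* Main.v *)
Require Import Defs.
From mathcomp Require Import all_boot all_order all_algebra.
From mathcomp Require Import zify ring.
Import GRing.Theory Num.Theory.
Local Open Scope ring_scope.

Lemma det2 (A : 'M[int]_2) : \det A = A 0 0 * A 1 1 - A 0 1 * A 1 0.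
Proof.
rewrite (expand_det_row _ 0) !big_ord_recl big_ord0 /cofactor !det_mx11 !mxE /=.
have e1 : lift (0:'I_2) (0:'I_1) = 1 by exact/val_inj.
have e2 : lift (ord0:'I_2) (0:'I_1) = 1 by exact/val_inj.
have e3 : lift (lift (ord0:'I_2) (ord0:'I_1)) (0:'I_1) = 0 by exact/val_inj.
have e4 : lift (ord0:'I_2) (ord0:'I_1) = 1 by exact/val_inj.
rewrite e3 e1 /= expr0 expr1 mul1r mulN1r addr0 mulrN.
by [].
Qed.

Lemma ord2 (i : 'I_2) : i = 0 \/ i = 1.
Proof. case: i => [[|[|//]] Hi]; [left|right]; exact/val_inj. Qed.

Lemma mx2P (A B : 'M[int]_2) : A 0 0 = B 0 0 -> A 0 1 = B 0 1 -> A 1 0 = B 1 0 -> A 1 1 = B 1 1 -> A = B.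
Proof.
move=> h1 h2 h3 h4; apply/matrixP => i j.
by case: (ord2 i) => ->; case: (ord2 j) => ->.
Qed.

Lemma mulE (A B : 'M[int]_2) i j : (A *m B) i j = A i 0 * B 0 j + A i 1 * B 1 j.
Proof. rewrite !mxE !big_ord_recl big_ord0 addr0. have e : lift ord0 (ord0 : 'I_1) = 1 :> 'I_2 by exact/val_inj. by rewrite e. Qed.

Definition mk (a b c d : int) : 'M[int]_2 :=
  \matrix_(i < 2, j < 2) if i == 0 then (if j == 0 then a else b) else (if j == 0 then c else d).

Lemma mkE a b c d : let M := mk a b c d in M 0 0 = a /\ M 0 1 = b /\ M 1 0 = c /\ M 1 1 = d.
Proof. by rewrite /= !mxE. Qed.

Theorem lemma8 (W : 'M[int]_2) :
  D1 W ->
  D1 (Lmx *m invmx (Lmx *m W *m Rmx) *m Rmx) /\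
  exists U : 'M[int]_2, D1 U /\ Lmx *m invmx (Lmx *m W *m Rmx) *m Rmx = Rmx *m U.
Proof.
move=> [hpos hdet].
set a := W 0 0; set b := W 0 1; set c := W 1 0; set d := W 1 1.
have hd : a * d - b * c = 1 by rewrite -hdet det2.
set P := Lmx *m W *m Rmx.
set I := mk (a+b+c+d) (-(a+b)) (-(a+c)) a.
have [m00 [m01 [m10 m11]]] := mkE (a+b+c+d) (-(a+b)) (-(a+c)) a.
have IP : I *m P = 1%:M.
  apply: mx2P; rewrite /I /P /Lmx /Rmx !mulE !mxE /= -/a -/b -/c -/d.
  1,4: by rewrite -[RHS]hd; ring.
  1,2: by ring.
have PI : P *m I = 1%:M by apply: mulmx1C.
have [Pu _] := mulmx1_unit PI.
have -> : invmx P = I by rewrite -[I]mulmx1 -(mulmxV Pu) mulmxA IP mul1mx.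
have ha := hpos 0 0; have hb := hpos 0 1; have hc := hpos 1 0; have hdd := hpos 1 1.
rewrite -/a in ha; rewrite -/b in hb; rewrite -/c in hc; rewrite -/d in hdd.
have [u00 [u01 [u10 u11]]] := mkE (a+c) c (b+d) d.
have [n00 [n01 [n10 n11]]] := mkE (a+b+c+d) (c+d) (b+d) d.
have EM : Lmx *m I *m Rmx = mk (a+b+c+d) (c+d) (b+d) d.
  apply: mx2P; rewrite /I /Lmx /Rmx !mulE !mxE /= -/a -/b -/c -/d; ring.
have EU : Rmx *m mk (a+c) c (b+d) d = mk (a+b+c+d) (c+d) (b+d) d.
  apply: mx2P; rewrite /Rmx !mulE !mxE /=; ring.
rewrite EM; split; last exists (mk (a+c) c (b+d) d).
  split; last by rewrite det2 !mxE /= -hd; ring.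
  move=> i j; case: (ord2 i) => ->; case: (ord2 j) => ->;
    rewrite ?n00 ?n01 ?n10 ?n11; lia.
split=> //; split; last by rewrite det2 !mxE /= -hd; ring.
move=> i j; case: (ord2 i) => ->; case: (ord2 j) => ->;
  rewrite ?u00 ?u01 ?u10 ?u11; lia.
Qed.
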